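(* Let $a_1,b_1,a'_1,b'_1,a_2,b_2,a'_2,b'_2\ge 0$ be such that the vectors $v_1=(a'_1-a_1,\,b'_1-b_1)$ and $v_2=(a'_2-a_2,\,b'_2-b_2)$ are linearly independent, and let $\epsilon\in(0,1)$. For rate functions $k_1(t),k_2(t),k_3(t),k_4(t)$ consider the system on $\mathbb{R}^2_{>0}$ $$\begin{pmatrix}\dot x\\ \dot y\end{pmatrix}=\big(k_1(t)x^{a_1}y^{b_1}-k_2(t)x^{a'_1}y^{b'_1}\big)v_1+\big(k_3(t)x^{a_2}y^{b_2}-k_4(t)x^{a'_2}y^{b'_2}\big)v_2 .$$ Consider the curves $\mathcal{C}_1: x^{a'_1-a_1}y^{b'_1-b_1}=\frac{1}{\epsilon^2}$, $\mathcal{C}_2: x^{a'_1-a_1}y^{b'_1-b_1}=\epsilon^2$, $\mathcal{C}_3: x^{a'_2-a_2}y^{b'_2-b_2}=\epsilon^2$, $\mathcal{C}_4: x^{a'_2-a_2}y^{b'_2-b_2}=\frac{1}{\epsilon^2}$ in $\mathbb{R}^2_{>0}$, and let $A=\mathcal{C}_2\cap\mathcal{C}_4$, $B=\mathcal{C}_1\cap\mathcal{C}_4$, $C=\mathcal{C}_1\cap\mathcal{C}_3$, $D=\mathcal{C}_2\cap\mathcal{C}_3$ (each a single point). Let $\mathbf{x}(t)$ be a solution with $\mathbf{x}(0)\in\mathbb{R}^2_{>0}$. Then: (i) if $k_1\equiv\epsilon,k_2\equiv\frac1\epsilon,k_3\equiv\frac1\epsilon,k_4\equiv\epsilon$, then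 $\lim_{t\to\infty}\mathbf{x}(t)=A$; (ii) if $k_1\equiv\frac1\epsilon,k_2\equiv\epsilon,k_3\equiv\frac1\epsilon,k_4\equiv\epsilon$, then $\lim_{t\to\infty}\mathbf{x}(t)=B$; (iii) if $k_1\equiv\frac1\epsilon,k_2\equiv\epsilon,k_3\equiv\epsilon,k_4\equiv\frac1\epsilon$, then $\lim_{t\to\infty}\mathbf{x}(t)=C$; (iv) if $k_1\equiv\epsilon,k_2\equiv\frac1\epsilon,k_3\equiv\epsilon,k_4\equiv\frac1\epsilon$, then $\lim_{t\to\infty}\mathbf{x}(t)=D$.
   Context: The system is the mass-action system of the reaction network $a_1X+b_1Y\rightleftharpoons a'_1X+b'_1Y$ (forward rate $k_1$, backward rate $k_2$) and $a_2X+b_2Y\rightleftharpoons a'_2X+b'_2Y$ (forward rate $k_3$, backward rate $k_4$); in the variable-$k$ setting the rates are allowed to vary in time with values in $[\epsilon,1/\epsilon]$, here they are fixed constants. *)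

(* Defs.v *)
From Stdlib Require Import Reals.
From Coquelicot Require Import Coquelicot.
Open Scope R_scope.

Definition mono (x y a b : R) : R := Rpower x a * Rpower y b.

Definition lin_indep2 (u1 u2 w1 w2 : R) : Prop :=
  forall c d : R, c * u1 + d * w1 = 0 -> c * u2 + d * w2 = 0 -> c = 0 /\ d = 0.

(* Reaction rates of the two reversible reactions
   a1 X + b1 Y <-> a1' X + b1' Y  (k1, k2),  a2 X + b2 Y <-> a2' X + b2' Y  (k3, k4). *)
Definition flux1 (a1 b1 a1' b1' k1 k2 x y : R) : R :=
  k1 * mono x y a1 b1 - k2 * mono x y a1' b1'.

Definition is_solution (a1 b1 a1' b1' a2 b2 a2' b2' k1 k2 k3 k4 : R)
    (x y : R -> R) : Prop :=
  (forall t, 0 <= t -> 0 < x t /\ 0 < y t) /\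
  (forall t, 0 < t ->
     is_derive x t (flux1 a1 b1 a1' b1' k1 k2 (x t) (y t) * (a1' - a1)
                  + flux1 a2 b2 a2' b2' k3 k4 (x t) (y t) * (a2' - a2)) /\
     is_derive y t (flux1 a1 b1 a1' b1' k1 k2 (x t) (y t) * (b1' - b1)
                  + flux1 a2 b2 a2' b2' k3 k4 (x t) (y t) * (b2' - b2))).

Definition converges_to_intersection (a1 b1 a1' b1' a2 b2 a2' b2' c1 c2 : R)
    (x y : R -> R) : Prop :=
  exists p q : R, 0 < p /\ 0 < q /\
    mono p q (a1' - a1) (b1' - b1) = c1 /\
    mono p q (a2' - a2) (b2' - b2) = c2 /\
    is_lim x p_infty p /\ is_lim y p_infty q.

(* Main.v *)
Require Import Defs.
From Stdlib Require Import Reals Lra Psatz Classical.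
From Coquelicot Require Import Coquelicot.
Open Scope R_scope.

Lemma der_cont f x l : is_derive f x l -> continuity_pt f x.
Proof.
  intro H. apply continuity_pt_filterlim. apply (ex_derive_continuous (K:=R_AbsRing) (V:=R_NormedModule)).
  eexists; eauto.
Qed.

Lemma mvt_upper (f df : R -> R) a b c : a <= b ->
  (forall t, a <= t <= b -> is_derive f t (df t)) ->
  (forall t, a <= t <= b -> df t <= c) -> f b - f a <= c * (b - a).
Proof.
  intros Hab Hd Hc.
  destruct (MVT_gen f a b df) as [xi [Hxi E]].
  - intros t Ht. apply Hd. rewrite Rmin_left in Ht by lra. rewrite Rmax_right in Ht by lra. lra.
  - intros t Ht. apply der_cont with (df t). apply Hd.
    rewrite Rmin_left in Ht by lra. rewrite Rmax_right in Ht by lra. lra.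
  - rewrite Rmin_left in Hxi by lra. rewrite Rmax_right in Hxi by lra.
    rewrite E. specialize (Hc xi Hxi). nra.
Qed.

Lemma mvt_lower (f df : R -> R) a b c : a <= b ->
  (forall t, a <= t <= b -> is_derive f t (df t)) ->
  (forall t, a <= t <= b -> c <= df t) -> c * (b - a) <= f b - f a.
Proof.
  intros Hab Hd Hc.
  destruct (MVT_gen f a b df) as [xi [Hxi E]].
  - intros t Ht. apply Hd. rewrite Rmin_left in Ht by lra. rewrite Rmax_right in Ht by lra. lra.
  - intros t Ht. apply der_cont with (df t). apply Hd.
    rewrite Rmin_left in Ht by lra. rewrite Rmax_right in Ht by lra. lra.
  - rewrite Rmin_left in Hxi by lra. rewrite Rmax_right in Hxi by lra.
    rewrite E. specialize (Hc xi Hxi). nra.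
Qed.

Lemma mvt_strict (f df : R -> R) a b : a < b ->
  (forall t, a <= t <= b -> is_derive f t (df t)) ->
  (forall t, a <= t <= b -> 0 < df t) -> f a < f b.
Proof.
  intros Hab Hd Hc.
  destruct (MVT_gen f a b df) as [xi [Hxi E]].
  - intros t Ht. apply Hd. rewrite Rmin_left in Ht by lra. rewrite Rmax_right in Ht by lra. lra.
  - intros t Ht. apply der_cont with (df t). apply Hd.
    rewrite Rmin_left in Ht by lra. rewrite Rmax_right in Ht by lra. lra.
  - rewrite Rmin_left in Hxi by lra. rewrite Rmax_right in Hxi by lra.
    specialize (Hc xi Hxi). nra.
Qed.

Lemma barrier (h dh : R -> R) t0 d :
  (forall t, t0 <= t -> is_derive h t (dh t)) ->
  (forall t, t0 <= t -> h t < d -> 0 < dh t) ->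
  forall t, t0 <= t -> Rmin (h t0) d <= h t.
Proof.
  intros Hd Hp t Ht.
  destruct (Rle_lt_dec (Rmin (h t0) d) (h t)) as [|Hlt]; auto. exfalso.
  destruct (continuity_ab_min h t0 t Ht) as [c [Hmin Hc]].
  { intros r Hr. apply der_cont with (dh r). apply Hd. lra. }
  assert (hct : h c <= h t) by (apply Hmin; lra).
  assert (H1 : h c < h t0) by (pose proof (Rmin_l (h t0) d); lra).
  assert (H2 : h c < d) by (pose proof (Rmin_r (h t0) d); lra).
  assert (Hct0 : t0 < c).
  { destruct (Rle_lt_dec c t0); auto. assert (c = t0) by lra. subst. lra. }
  pose proof (der_cont h c (dh c) (Hd c ltac:(lra))) as Hcont.
  destruct (Hcont (d - h c) ltac:(lra)) as [alp [Halp Hn]].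
  set (s := c - Rmin alp (c - t0) / 2).
  assert (Hm1 : 0 < Rmin alp (c - t0)) by (apply Rmin_glb_lt; lra).
  pose proof (Rmin_l alp (c - t0)). pose proof (Rmin_r alp (c - t0)).
  assert (Hs : h s < h c).
  { apply mvt_strict with dh. unfold s; lra.
    - intros r Hr. apply Hd. unfold s in Hr; lra.
    - intros r Hr. apply Hp. unfold s in Hr; lra.
      destruct (Req_dec r c) as [->|Hne]; [lra|].
      assert (R_dist (h r) (h c) < d - h c).
      { apply Hn. split. split. exact I. auto.
        simpl. unfold R_dist. unfold s in Hr. rewrite Rabs_left1; lra. }
      unfold R_dist in H3. apply Rabs_def2 in H3. lra. }
  assert (h c <= h s) by (apply Hmin; unfold s; lra). lra.
Qed.

Definition kf t := exp t * (t - 1) + 1.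

Lemma exp_opp_mul t : exp t * exp (- t) = 1.
Proof. rewrite <- exp_plus. replace (t + - t) with 0 by ring. apply exp_0. Qed.

Lemma kf_nonneg t : 0 <= kf t.
Proof.
  unfold kf. pose proof (exp_ineq1_le (- t)). pose proof (exp_opp_mul t).
  pose proof (exp_pos t). nra.
Qed.

Lemma kf_pos t : t <> 0 -> 0 < kf t.
Proof.
  intro H. unfold kf. pose proof (exp_ineq1 (- t) ltac:(lra)). pose proof (exp_opp_mul t).
  pose proof (exp_pos t). nra.
Qed.

Lemma kf_lt1 t : t < 1 -> kf t < 1.
Proof. intro. unfold kf. pose proof (exp_pos t). nra. Qed.

Lemma kf_ge t : 2 <= t -> t <= kf t.
Proof. intro. unfold kf. pose proof (exp_ineq1_le t). pose proof (exp_pos t). nra. Qed.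

Lemma kf_low_neg t : t <= 0 -> 1 - 2 * exp (t / 2) <= kf t.
Proof.
  intro. unfold kf. pose proof (exp_ineq1_le (- (t/2))).
  pose proof (exp_opp_mul (t/2)). pose proof (exp_pos (t/2)).
  replace (exp t) with (exp (t/2) * exp (t/2)) by (rewrite <- exp_plus; f_equal; field).
  nra.
Qed.

Lemma kf_upper t : kf t <= t ^ 2 * exp (Rabs t).
Proof.
  unfold kf. destruct (Rle_lt_dec 0 t).
  - rewrite Rabs_right by lra.
    pose proof (exp_ineq1_le t). pose proof (exp_opp_mul t). pose proof (exp_pos t).
    pose proof (exp_pos (-t)).
    assert (exp (- t) * (1 + t) <= 1) by nra.
    assert (t - 1 + exp (- t) <= t ^ 2).
    { assert ((t - 1 + exp (-t)) * (1 + t) <= t ^ 2) by nra. nra. }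
    assert (exp t * (t - 1) + 1 = exp t * (t - 1 + exp (- t))) by nra.
    nra.
  - rewrite Rabs_left by lra. set (s := - t).
    replace t with (- s) by (unfold s; ring).
    assert (0 < s) by (unfold s; lra).
    pose proof (exp_ineq1_le (- s)). pose proof (exp_opp_mul s). pose proof (exp_pos s).
    pose proof (exp_pos (-s)).
    assert (exp s - 1 <= s * exp s) by nra.
    assert (exp s - 1 - s <= s ^ 2 * exp s) by nra.
    assert (exp (- s) * (exp s - 1 - s) <= s ^ 2) by nra.
    replace (exp (- s) * (- s - 1) + 1) with (exp (- s) * (exp s - 1 - s)) by nra.
    replace (- - s) with s by ring. pose proof (exp_ineq1_le s). nra.
Qed.

Lemma kf_derive t : is_derive kf t (t * exp t).
Proof. unfold kf. auto_derive; auto. ring. Qed.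

Lemma kf_mono_pos a b : 0 <= a <= b -> kf a <= kf b.
Proof.
  intro H. pose proof (mvt_lower kf (fun t => t * exp t) a b 0 ltac:(lra)
    (fun t _ => kf_derive t)). 
  assert (0 * (b - a) <= kf b - kf a).
  { apply H0. intros t Ht. pose proof (exp_pos t). nra. }
  lra.
Qed.

Lemma kf_mono_neg a b : b <= a <= 0 -> kf a <= kf b.
Proof.
  intro H. pose proof (mvt_upper kf (fun t => t * exp t) b a 0 ltac:(lra)
    (fun t _ => kf_derive t)). 
  assert (kf a - kf b <= 0 * (a - b)).
  { apply H0. intros t Ht. pose proof (exp_pos t). nra. }
  lra.
Qed.

Lemma kf_away e t : 0 < e -> e <= Rabs t -> Rmin (kf e) (kf (- e)) <= kf t.
Proof.
  intros He Ht. destruct (Rle_lt_dec 0 t).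
  - rewrite Rabs_right in Ht by lra. pose proof (kf_mono_pos e t ltac:(lra)).
    pose proof (Rmin_l (kf e) (kf (-e))). lra.
  - rewrite Rabs_left in Ht by lra. pose proof (kf_mono_neg (-e) t ltac:(lra)).
    pose proof (Rmin_r (kf e) (kf (-e))). lra.
Qed.

Lemma kf_away_pos e : 0 < e -> 0 < Rmin (kf e) (kf (- e)).
Proof. intro. apply Rmin_glb_lt; apply kf_pos; lra. Qed.

Lemma exp_le_exp x y : x <= y -> exp x <= exp y.
Proof. intro H. destruct (Rle_lt_or_eq_dec x y H). left; apply exp_increasing; auto. subst; lra. Qed.

Lemma phi_ineq phi P : Rabs phi <= P -> exp (- P) * phi ^ 2 <= (exp phi - 1) * phi.
Proof.
  intro H. pose proof (exp_pos phi). pose proof (exp_pos (-P)).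
  destruct (Rle_lt_dec 0 phi).
  - rewrite Rabs_right in H by lra. pose proof (exp_ineq1_le phi).
    assert (exp (- P) <= 1). { rewrite <- exp_0. apply exp_le_exp. lra. }
    assert (phi * phi <= (exp phi - 1) * phi) by (apply Rmult_le_compat_r; lra).
    assert (exp (-P) * (phi * phi) <= phi * phi) by (pose proof (Rle_0_sqr phi); unfold Rsqr in *; nra).
    replace (phi ^ 2) with (phi * phi) by ring. lra.
  - rewrite Rabs_left in H by lra. pose proof (exp_ineq1_le (- phi)).
    pose proof (exp_opp_mul phi).
    assert (exp (- P) <= exp phi) by (apply exp_le_exp; lra).
    assert (1 - exp phi >= - phi * exp phi) by nra.
    assert ((exp phi - 1) * phi >= phi * phi * exp phi) by nra.
    assert (phi * phi * exp (-P) <= phi * phi * exp phi) by (apply Rmult_le_compat_l; nra).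
    replace (phi ^ 2) with (phi * phi) by ring. lra.
Qed.

Lemma sign_term a phi : a * phi < 0 -> 0 < (1 - exp phi) * a.
Proof.
  intro H. destruct (Rle_lt_dec 0 a).
  - assert (phi < 0) by nra. assert (exp phi < 1) by (rewrite <- exp_0; apply exp_increasing; lra).
    destruct (Req_dec a 0); [subst; lra|]. nra.
  - assert (0 < phi) by nra. assert (1 < exp phi) by (rewrite <- exp_0; apply exp_increasing; lra).
    nra.
Qed.

Lemma term_nonneg p a phi : 0 < p -> (a <> 0 -> a * phi < 0) -> 0 <= p * (1 - exp phi) * a.
Proof.
  intros Hp H. destruct (Req_dec a 0). subst; lra.
  pose proof (sign_term a phi (H H0)). nra.
Qed.

Lemma face_one a b du dw Wb rest : 0 <= Wb -> 0 <= rest -> Rabs dw <= Wb -> a <> 0 ->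
  du < - (1 + Wb * (Rabs b / Rabs a) + rest) -> a * (a * du + b * dw) < 0.
Proof.
  intros HW Hr Hdw Ha Hdu.
  assert (Hpa : 0 < Rabs a) by (apply Rabs_pos_lt; auto).
  set (r := Rabs b / Rabs a).
  assert (Hr1 : r * Rabs a = Rabs b) by (unfold r; field; lra).
  assert (0 <= r) by (unfold r; apply Rdiv_le_0_compat; [apply Rabs_pos|lra]).
  assert (Hab : a * b * dw <= Rabs a * Rabs b * Wb).
  { rewrite <- Rabs_mult. assert (a * b * dw <= Rabs (a*b) * Rabs dw).
    { rewrite <- Rabs_mult. apply Rle_abs. }
    pose proof (Rabs_pos (a*b)). nra. }
  assert (Ha2 : 0 < a * a).
  { destruct (Rtotal_order a 0) as [h|[h|h]]; [nra|contradiction|nra]. }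
  assert (a * a = Rabs a * Rabs a) by (rewrite <- Rabs_mult; rewrite Rabs_right; nra).
  assert (a * a * du < - (a * a) * (1 + Wb * r + rest)).
  { replace (- (a * a) * (1 + Wb * r + rest)) with (a * a * (- (1 + Wb * r + rest))) by ring.
    apply Rmult_lt_compat_l; auto. }
  assert (a * a * (Wb * r) = Rabs a * Rabs b * Wb).
  { rewrite H0. rewrite <- Hr1. ring. }
  nra.
Qed.

Lemma face (a1 b1 a2 b2 p1 p2 du dw Wb : R) : a1 * b2 - a2 * b1 <> 0 -> 0 < p1 -> 0 < p2 ->
  0 <= Wb -> Rabs dw <= Wb ->
  du < - (1 + Wb * (Rabs b1 / Rabs a1) + Wb * (Rabs b2 / Rabs a2)) ->
  0 < p1 * (1 - exp (a1 * du + b1 * dw)) * a1 + p2 * (1 - exp (a2 * du + b2 * dw)) * a2.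
Proof.
  intros Hdet Hp1 Hp2 HW Hdw Hdu.
  assert (R1 : 0 <= Wb * (Rabs b1 / Rabs a1)).
  { apply Rmult_le_pos; auto. destruct (Req_dec a1 0). subst. rewrite Rabs_R0. unfold Rdiv. rewrite Rinv_0. right; ring.
    apply Rdiv_le_0_compat. apply Rabs_pos. apply Rabs_pos_lt; auto. }
  assert (R2 : 0 <= Wb * (Rabs b2 / Rabs a2)).
  { apply Rmult_le_pos; auto. destruct (Req_dec a2 0). subst. rewrite Rabs_R0. unfold Rdiv. rewrite Rinv_0. right; ring.
    apply Rdiv_le_0_compat. apply Rabs_pos. apply Rabs_pos_lt; auto. }
  assert (T1 : a1 <> 0 -> a1 * (a1 * du + b1 * dw) < 0).
  { intro. apply face_one with Wb (Wb * (Rabs b2 / Rabs a2)); auto; lra. }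
  assert (T2 : a2 <> 0 -> a2 * (a2 * du + b2 * dw) < 0).
  { intro. apply face_one with Wb (Wb * (Rabs b1 / Rabs a1)); auto; lra. }
  pose proof (term_nonneg p1 a1 _ Hp1 T1). pose proof (term_nonneg p2 a2 _ Hp2 T2).
  destruct (Req_dec a1 0).
  - assert (a2 <> 0) by (intro; apply Hdet; subst; ring).
    pose proof (sign_term _ _ (T2 H2)). nra.
  - pose proof (sign_term _ _ (T1 H1)). nra.
Qed.

Lemma G_piece_derive (x : R -> R) t dx us : 0 < x t -> is_derive x t dx ->
  is_derive (fun t => exp us * kf (ln (x t) - us)) t ((ln (x t) - us) * dx).
Proof.
  intros Hx Hd. unfold kf. auto_derive; repeat split; auto; try (eexists; eauto).
  replace (Derive (fun x0 => x x0) t) with dx by (symmetry; apply is_derive_unique; auto).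
  rewrite exp_plus, exp_ln by auto. pose proof (exp_opp_mul us).
  replace (exp us * (1 * dx * / x t * (x t * exp (- us)) * (ln (x t) + - us + - (1)) +
    x t * exp (- us) * (1 * dx * / x t))) with ((exp us * exp (- us)) * (dx * (ln (x t) + - us + - (1)) + dx))
    by (field; lra).
  rewrite H. ring.
Qed.

Lemma ln_derive (x : R -> R) t dx : 0 < x t -> is_derive x t dx ->
  is_derive (fun t => ln (x t)) t (dx / x t).
Proof.
  intros Hx Hd. auto_derive; repeat split; auto; try (eexists; eauto).
  replace (Derive (fun x0 => x x0) t) with dx by (symmetry; apply is_derive_unique; auto).
  field. lra.
Qed.

Lemma flux_form a b a' b' kp km s r us ws : 0 < kp -> 0 < km -> 0 < s -> 0 < r ->
  (a' - a) * us + (b' - b) * ws = ln kp - ln km ->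
  flux1 a b a' b' kp km s r =
  kp * exp (a * ln s + b * ln r) * (1 - exp ((a' - a) * (ln s - us) + (b' - b) * (ln r - ws))).
Proof.
  intros Hkp Hkm Hs Hr Heq. unfold flux1, mono, Rpower.
  rewrite <- (exp_ln kp) by auto. rewrite <- (exp_ln km) by auto.
  rewrite !Rmult_minus_distr_l, Rmult_1_r. rewrite <- !exp_plus.
  f_equal. f_equal. lra.
Qed.

Lemma quad_bound al1 be1 al2 be2 du dw :
  let D := al1 * be2 - al2 * be1 in
  let p1 := al1 * du + be1 * dw in
  let p2 := al2 * du + be2 * dw in
  D ^ 2 * (du ^ 2 + dw ^ 2) <= 4 * (al1^2 + be1^2 + al2^2 + be2^2) * (p1 ^ 2 + p2 ^ 2).
Proof.
  intros D p1 p2.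
  assert (E1 : D * du = be2 * p1 - be1 * p2) by (unfold D, p1, p2; ring).
  assert (E2 : D * dw = al1 * p2 - al2 * p1) by (unfold D, p1, p2; ring).
  replace (D ^ 2 * (du ^ 2 + dw ^ 2)) with ((D * du) ^ 2 + (D * dw) ^ 2) by ring.
  rewrite E1, E2.
  assert (forall a b c d : R, (a * c - b * d) ^ 2 <= 2 * (a^2 * c^2 + b^2 * d^2)).
  { intros. pose proof (pow2_ge_0 (a*c+b*d)). nra. }
  pose proof (H be2 be1 p1 p2). pose proof (H al1 al2 p2 p1).
  assert (0 <= al1^2 * p1^2) by nra. assert (0 <= al2^2 * p2^2) by nra.
  assert (0 <= be1^2 * p1^2) by nra. assert (0 <= be2^2 * p2^2) by nra.
  nra.
Qed.

Lemma decay_to_zero (G dG : R -> R) t0 c : 0 < c ->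
  (forall t, t0 <= t -> is_derive G t (dG t)) ->
  (forall t, t0 <= t -> 0 <= G t) ->
  (forall t, t0 <= t -> dG t <= - c * G t) ->
  forall eps, 0 < eps -> exists T, t0 <= T /\ forall t, T <= t -> G t < eps.
Proof.
  intros Hc Hd Hpos Hdec eps Heps.
  assert (Hneg : forall t, t0 <= t -> dG t <= 0).
  { intros t Ht. specialize (Hdec t Ht). specialize (Hpos t Ht). nra. }
  assert (Hmono : forall s t, t0 <= s -> s <= t -> G t <= G s).
  { intros s t Hs Hst. pose proof (mvt_upper G dG s t 0 Hst).
    assert (G t - G s <= 0 * (t - s)).
    { apply H. intros r Hr. apply Hd. lra. intros r Hr. apply Hneg. lra. }
    lra. }
  destruct (classic (exists T, t0 <= T /\ G T < eps)) as [[T [HT HG]]|Hno].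
  - exists T. split; auto. intros t Ht. pose proof (Hmono T t HT Ht). lra.
  - exfalso.
    assert (Hall : forall T, t0 <= T -> eps <= G T).
    { intros T HT. destruct (Rle_lt_dec eps (G T)); auto. exfalso. apply Hno. exists T; auto. }
    set (t := t0 + G t0 / (c * eps) + 1).
    assert (Hce : 0 < c * eps) by nra.
    assert (Hg0 : 0 <= G t0) by (apply Hpos; lra).
    assert (0 <= G t0 / (c * eps)) by (apply Rdiv_le_0_compat; lra).
    pose proof (mvt_upper G dG t0 t (- c * eps) ltac:(unfold t; lra)) as Hm.
    assert (G t - G t0 <= - c * eps * (t - t0)).
    { apply Hm. intros r Hr. apply Hd. lra.
      intros r Hr. specialize (Hdec r ltac:(lra)). specialize (Hall r ltac:(lra)). nra. }
    assert (- c * eps * (t - t0) = - G t0 - c * eps).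
    { unfold t. field. lra. }
    pose proof (Hpos t ltac:(unfold t; lra)). nra.
Qed.

Lemma conv_from_G (x G : R -> R) us T0 :
  (forall eps, 0 < eps -> exists T, T0 <= T /\ forall t, T <= t -> G t < eps) ->
  (forall t, T0 <= t -> 0 < x t /\ exp us * kf (ln (x t) - us) <= G t) ->
  is_lim x p_infty (exp us).
Proof.
  intros HG Hb. apply is_lim_spec. intro eps. simpl.
  set (xs := exp us). assert (Hxs : 0 < xs) by apply exp_pos.
  pose proof (cond_pos eps) as He.
  set (e1 := ln (1 + eps / xs)).
  assert (He1 : 0 < e1).
  { unfold e1. rewrite <- ln_1. apply ln_increasing. lra.
    assert (0 < eps / xs) by (apply Rdiv_lt_0_compat; lra). lra. }
  set (m := Rmin (kf e1) (kf (- e1))).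
  assert (Hm : 0 < m) by (apply kf_away_pos; auto).
  destruct (HG (xs * m) ltac:(nra)) as [T [HT HGT]].
  exists T. intros t Ht.
  destruct (Hb t ltac:(lra)) as [Hx Hk].
  specialize (HGT t ltac:(lra)).
  set (du := ln (x t) - us).
  assert (Hdu : Rabs du < e1).
  { destruct (Rlt_le_dec (Rabs du) e1); auto. exfalso.
    pose proof (kf_away e1 du He1 r) as Hka. change (m <= kf du) in Hka.
    change (xs * kf du <= G t) in Hk.
    assert (xs * m <= xs * kf du) by (apply Rmult_le_compat_l; lra). lra. }
  assert (Ex : x t = xs * exp du).
  { unfold xs, du. rewrite <- exp_plus. replace (us + (ln (x t) - us)) with (ln (x t)) by ring.
    rewrite exp_ln; auto. }
  rewrite Ex. apply Rabs_def2 in Hdu. destruct Hdu as [Hd1 Hd2].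
  assert (exp du < 1 + eps / xs).
  { rewrite <- (exp_ln (1 + eps / xs)). apply exp_increasing. fold e1. lra.
    assert (0 < eps / xs) by (apply Rdiv_lt_0_compat; lra). lra. }
  assert (exp (- e1) < exp du) by (apply exp_increasing; lra).
  assert (exp (- e1) * (1 + eps / xs) = 1).
  { unfold e1. rewrite exp_Ropp, exp_ln. field. split. lra.
    assert (0 < eps / xs) by (apply Rdiv_lt_0_compat; lra). lra.
    assert (0 < eps / xs) by (apply Rdiv_lt_0_compat; lra). lra. }
  assert (xs * (eps / xs) = eps) by (field; lra).
  apply Rabs_def1.
  - nra.
  - assert (0 < eps / xs) by (apply Rdiv_lt_0_compat; lra).
    assert (exp (- e1) > 0) by apply exp_pos.
    assert (1 - exp (- e1) = exp (- e1) * (eps / xs)) by nra.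
    assert (exp (- e1) < 1).
    { rewrite <- exp_0. apply exp_increasing. lra. }
    nra.
Qed.

Lemma mul_lower a v B : Rabs v <= B -> - (Rabs a * B) <= a * v.
Proof.
  intro H. pose proof (Rabs_pos a). pose proof (Rle_abs (- (a * v))).
  rewrite Rabs_Ropp, Rabs_mult in H1. nra.
Qed.

Lemma mul_upper a v B : Rabs v <= B -> a * v <= Rabs a * B.
Proof.
  intro H. pose proof (Rabs_pos a). pose proof (Rle_abs (a * v)).
  rewrite Rabs_mult in H1. nra.
Qed.

Lemma mono_exp us ws al be : mono (exp us) (exp ws) al be = exp (al * us + be * ws).
Proof. unfold mono, Rpower. rewrite !ln_exp, exp_plus. reflexivity. Qed.

Lemma exp_ratio k1 k2 : 0 < k1 -> 0 < k2 -> exp (ln k1 - ln k2) = k1 / k2.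
Proof.
  intros. unfold Rminus. rewrite exp_plus, exp_Ropp, !exp_ln by auto. reflexivity.
Qed.


Lemma abs_between v lo hi : lo <= v -> v <= hi -> Rabs v <= Rabs lo + Rabs hi.
Proof.
  intros. pose proof (Rle_abs lo). pose proof (Rle_abs (- lo)). rewrite Rabs_Ropp in H2.
  pose proof (Rle_abs hi). pose proof (Rabs_pos lo). pose proof (Rabs_pos hi). unfold Rabs at 1. destruct (Rcase_abs v); lra.
Qed.

Theorem general (a1 b1 a1' b1' a2 b2 a2' b2' k1 k2 k3 k4 : R) (x y : R -> R) :
  0 < k1 -> 0 < k2 -> 0 < k3 -> 0 < k4 ->
  (a1' - a1) * (b2' - b2) - (a2' - a2) * (b1' - b1) <> 0 ->
  is_solution a1 b1 a1' b1' a2 b2 a2' b2' k1 k2 k3 k4 x y ->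
  exists p q : R, 0 < p /\ 0 < q /\
    mono p q (a1' - a1) (b1' - b1) = k1 / k2 /\
    mono p q (a2' - a2) (b2' - b2) = k3 / k4 /\
    is_lim x p_infty p /\ is_lim y p_infty q.
Proof.
  intros Hk1 Hk2 Hk3 Hk4 HD [Hpos Hder].
  set (al1 := a1' - a1) in *. set (be1 := b1' - b1) in *.
  set (al2 := a2' - a2) in *. set (be2 := b2' - b2) in *.
  set (Dt := al1 * be2 - al2 * be1) in *.
  set (c1 := ln k1 - ln k2). set (c2 := ln k3 - ln k4).
  set (us := (c1 * be2 - c2 * be1) / Dt). set (ws := (al1 * c2 - al2 * c1) / Dt).
  assert (E1 : al1 * us + be1 * ws = c1) by (unfold us, ws; unfold Dt in *; field; auto).
  assert (E2 : al2 * us + be2 * ws = c2) by (unfold us, ws; unfold Dt in *; field; auto).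
  set (xs := exp us). set (ys := exp ws).
  assert (Hxs : 0 < xs) by apply exp_pos. assert (Hys : 0 < ys) by apply exp_pos.
  set (du := fun t => ln (x t) - us). set (dw := fun t => ln (y t) - ws).
  set (ph1 := fun t => al1 * du t + be1 * dw t).
  set (ph2 := fun t => al2 * du t + be2 * dw t).
  set (P1 := fun t => k1 * exp (a1 * ln (x t) + b1 * ln (y t))).
  set (P2 := fun t => k3 * exp (a2 * ln (x t) + b2 * ln (y t))).
  set (F1 := fun t => P1 t * (1 - exp (ph1 t))).
  set (F2 := fun t => P2 t * (1 - exp (ph2 t))).
  assert (HP1 : forall t, 0 < P1 t) by (intro; unfold P1; pose proof (exp_pos (a1 * ln (x t) + b1 * ln (y t))); nra).
  assert (HP2 : forall t, 0 < P2 t) by (intro; unfold P2; pose proof (exp_pos (a2 * ln (x t) + b2 * ln (y t))); nra).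
  assert (HF1 : forall t, 0 < t -> flux1 a1 b1 a1' b1' k1 k2 (x t) (y t) = F1 t).
  { intros t Ht. destruct (Hpos t ltac:(lra)). apply flux_form; auto. }
  assert (HF2 : forall t, 0 < t -> flux1 a2 b2 a2' b2' k3 k4 (x t) (y t) = F2 t).
  { intros t Ht. destruct (Hpos t ltac:(lra)). apply flux_form; auto. }
  assert (Hdx : forall t, 0 < t -> is_derive x t (F1 t * al1 + F2 t * al2)).
  { intros t Ht. rewrite <- HF1, <- HF2 by auto. apply Hder; auto. }
  assert (Hdy : forall t, 0 < t -> is_derive y t (F1 t * be1 + F2 t * be2)).
  { intros t Ht. rewrite <- HF1, <- HF2 by auto. apply Hder; auto. }
  set (G := fun t => xs * kf (du t) + ys * kf (dw t)).
  set (dG := fun t => F1 t * ph1 t + F2 t * ph2 t).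
  assert (HdG : forall t, 0 < t -> is_derive G t (dG t)).
  { intros t Ht. destruct (Hpos t ltac:(lra)) as [Hx Hy].
    pose proof (G_piece_derive x t _ us Hx (Hdx t Ht)) as D1.
    pose proof (G_piece_derive y t _ ws Hy (Hdy t Ht)) as D2.
    pose proof (is_derive_plus _ _ _ _ _ D1 D2) as D3.
    replace (dG t) with (plus ((ln (x t) - us) * (F1 t * al1 + F2 t * al2))
                              ((ln (y t) - ws) * (F1 t * be1 + F2 t * be2))).
    exact D3. unfold plus; simpl. unfold dG, ph1, ph2, du, dw. ring. }
  assert (Hneg1 : forall P phi, 0 < P -> P * (1 - exp phi) * phi <= 0).
  { intros P phi HP. pose proof (phi_ineq phi (Rabs phi) (Rle_refl _)).
    pose proof (exp_pos (- Rabs phi)). pose proof (pow2_ge_0 phi).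
    assert (0 <= (exp phi - 1) * phi) by nra. nra. }
  assert (HdGneg : forall t, 0 < t -> dG t <= 0).
  { intros t Ht. unfold dG, F1, F2. pose proof (Hneg1 (P1 t) (ph1 t) (HP1 t)).
    pose proof (Hneg1 (P2 t) (ph2 t) (HP2 t)). lra. }
  assert (Gnn : forall t, 0 <= G t).
  { intro t. unfold G. pose proof (kf_nonneg (du t)). pose proof (kf_nonneg (dw t)). nra. }
  assert (Gmono : forall s t, 0 < s -> s <= t -> G t <= G s).
  { intros s t Hs Hst. pose proof (mvt_upper G dG s t 0 Hst).
    assert (G t - G s <= 0 * (t - s)).
    { apply H. intros r Hr. apply HdG. lra. intros r Hr. apply HdGneg. lra. }
    lra. }
  set (Ub := Rmax 2 (Rmax (G 1 / xs) (G 1 / ys))).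
  assert (HUb2 : 2 <= Ub) by apply Rmax_l.
  assert (Hub : forall t, 1 <= t -> du t <= Ub /\ dw t <= Ub).
  { intros t Ht. pose proof (Gmono 1 t ltac:(lra) Ht).
    pose proof (kf_nonneg (du t)). pose proof (kf_nonneg (dw t)).
    pose proof (Rmax_r 2 (Rmax (G 1 / xs) (G 1 / ys))).
    pose proof (Rmax_l (G 1 / xs) (G 1 / ys)). pose proof (Rmax_r (G 1 / xs) (G 1 / ys)).
    fold Ub in H2. split.
    - destruct (Rlt_le_dec (du t) 2). lra. pose proof (kf_ge _ r).
      assert (xs * kf (du t) <= G 1) by (unfold G in H |- *; nra).
      assert (kf (du t) <= G 1 / xs) by (apply Rmult_le_reg_l with xs; auto; field_simplify; lra).
      lra.
    - destruct (Rlt_le_dec (dw t) 2). lra. pose proof (kf_ge _ r).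
      assert (ys * kf (dw t) <= G 1) by (unfold G in H |- *; nra).
      assert (kf (dw t) <= G 1 / ys) by (apply Rmult_le_reg_l with ys; auto; field_simplify; lra).
      lra. }
  assert (Horig : exists t0 N, 1 <= t0 /\ 0 <= N /\ forall t, t0 <= t -> - N <= du t \/ - N <= dw t).
  { destruct (classic (exists t0, 1 <= t0 /\ du t0 < 1 /\ dw t0 < 1)) as [[t0 [H1 [H2 H3]]] | Hno].
    - set (S := xs + ys).
      assert (HGt0 : G t0 < S).
      { unfold G, S. pose proof (kf_lt1 _ H2). pose proof (kf_lt1 _ H3). nra. }
      set (gam := S - G t0).
      assert (Hgam : 0 < gam) by (unfold gam; lra).
      set (L := ln (gam / (2 * S))).
      set (N := 2 * Rabs L + 2).
      exists t0, N. split; auto. split. unfold N; pose proof (Rabs_pos L); lra.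
      intros t Ht.
      destruct (Rle_lt_dec (-N) (du t)); [left; auto|].
      destruct (Rle_lt_dec (-N) (dw t)); [right; auto|]. exfalso.
      set (e := exp (- N / 2)).
      assert (He : e < gam / (2 * S)).
      { unfold e. rewrite <- (exp_ln (gam / (2 * S))). apply exp_increasing. fold L.
        unfold N. pose proof (Rle_abs (- L)). rewrite Rabs_Ropp in H. lra.
        apply Rdiv_lt_0_compat; unfold S; lra. }
      assert (Hu : 1 - 2 * e <= kf (du t)).
      { pose proof (kf_low_neg (du t) ltac:(unfold N in *; pose proof (Rabs_pos L); lra)).
        assert (exp (du t / 2) <= e) by (apply exp_le_exp; lra). lra. }
      assert (Hw : 1 - 2 * e <= kf (dw t)).
      { pose proof (kf_low_neg (dw t) ltac:(unfold N in *; pose proof (Rabs_pos L); lra)).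
        assert (exp (dw t / 2) <= e) by (apply exp_le_exp; lra). lra. }
      assert (G t >= S - 2 * S * e) by (unfold G, S; nra).
      assert (2 * S * e < gam).
      { assert (2 * S * (gam / (2 * S)) = gam) by (field; unfold S; lra).
        assert (0 < 2 * S) by (unfold S; lra). nra. }
      pose proof (Gmono t0 t ltac:(lra) Ht). unfold gam in *. lra.
    - exists 1, 0. split. lra. split. lra. intros t Ht.
      destruct (Rle_lt_dec 1 (du t)). left; lra.
      destruct (Rle_lt_dec 1 (dw t)). right; lra.
      exfalso. apply Hno. exists t. repeat split; auto. }
  destruct Horig as [t0 [N [Ht0 [HN Hav]]]].
  set (Wb := N + Ub).
  assert (HWb : 0 <= Wb) by (unfold Wb; lra).
  set (Lx := Rmax N (1 + Wb * (Rabs be1 / Rabs al1) + Wb * (Rabs be2 / Rabs al2))).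
  set (Ly := Rmax N (1 + Wb * (Rabs al1 / Rabs be1) + Wb * (Rabs al2 / Rabs be2))).
  assert (Hxlow : forall t, t0 <= t -> Rmin (ln (x t0)) (us - Lx) <= ln (x t)).
  { apply (barrier (fun t => ln (x t)) (fun t => (F1 t * al1 + F2 t * al2) / x t)).
    - intros t Ht. destruct (Hpos t ltac:(lra)). apply ln_derive; auto. apply Hdx. lra.
    - intros t Ht Hlt. destruct (Hpos t ltac:(lra)) as [Hx _].
      pose proof (Rmax_l N (1 + Wb * (Rabs be1 / Rabs al1) + Wb * (Rabs be2 / Rabs al2))).
      pose proof (Rmax_r N (1 + Wb * (Rabs be1 / Rabs al1) + Wb * (Rabs be2 / Rabs al2))).
      fold Lx in H, H0.
      assert (Hdu : du t < - Lx) by (unfold du; lra).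
      assert (Hdw : - N <= dw t) by (destruct (Hav t Ht); lra).
      assert (Hdw2 : dw t <= Ub) by (apply Hub; lra).
      assert (Habs : Rabs (dw t) <= Wb).
      { pose proof (abs_between _ _ _ Hdw Hdw2). rewrite Rabs_Ropp, (Rabs_right N), (Rabs_right Ub) in H1 by lra; unfold Wb; lra. }
      pose proof (face al1 be1 al2 be2 (P1 t) (P2 t) (du t) (dw t) Wb HD (HP1 t) (HP2 t) HWb Habs ltac:(lra)).
      apply Rdiv_lt_0_compat; [|auto]. unfold F1, F2, ph1, ph2. lra. }
  assert (Hylow : forall t, t0 <= t -> Rmin (ln (y t0)) (ws - Ly) <= ln (y t)).
  { apply (barrier (fun t => ln (y t)) (fun t => (F1 t * be1 + F2 t * be2) / y t)).
    - intros t Ht. destruct (Hpos t ltac:(lra)). apply ln_derive; auto. apply Hdy. lra.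
    - intros t Ht Hlt. destruct (Hpos t ltac:(lra)) as [_ Hy].
      pose proof (Rmax_l N (1 + Wb * (Rabs al1 / Rabs be1) + Wb * (Rabs al2 / Rabs be2))).
      pose proof (Rmax_r N (1 + Wb * (Rabs al1 / Rabs be1) + Wb * (Rabs al2 / Rabs be2))).
      fold Ly in H, H0.
      assert (Hdw : dw t < - Ly) by (unfold dw; lra).
      assert (Hdu : - N <= du t) by (destruct (Hav t Ht); lra).
      assert (Hdu2 : du t <= Ub) by (apply Hub; lra).
      assert (Habs : Rabs (du t) <= Wb).
      { pose proof (abs_between _ _ _ Hdu Hdu2). rewrite Rabs_Ropp, (Rabs_right N), (Rabs_right Ub) in H1 by lra; unfold Wb; lra. }
      assert (HD' : be1 * al2 - be2 * al1 <> 0) by (intro; apply HD; unfold Dt; lra).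
      pose proof (face be1 al1 be2 al2 (P1 t) (P2 t) (dw t) (du t) Wb HD' (HP1 t) (HP2 t) HWb Habs ltac:(lra)).
      apply Rdiv_lt_0_compat; [|auto]. unfold F1, F2, ph1, ph2.
      replace (al1 * du t + be1 * dw t) with (be1 * dw t + al1 * du t) by ring.
      replace (al2 * du t + be2 * dw t) with (be2 * dw t + al2 * du t) by ring. lra. }
  set (lou := Rmin (ln (x t0)) (us - Lx) - us).
  set (low := Rmin (ln (y t0)) (ws - Ly) - ws).
  set (Lam := Rabs lou + Rabs low + Ub).
  assert (Hdub : forall t, t0 <= t -> Rabs (du t) <= Lam /\ Rabs (dw t) <= Lam).
  { intros t Ht. pose proof (Hxlow t Ht). pose proof (Hylow t Ht). destruct (Hub t ltac:(lra)).
    pose proof (Rabs_pos lou). pose proof (Rabs_pos low).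
    split.
    - pose proof (abs_between (du t) lou Ub ltac:(unfold lou, du; lra) H1).
      rewrite (Rabs_right Ub) in H5 by lra. unfold Lam; lra.
    - pose proof (abs_between (dw t) low Ub ltac:(unfold low, dw; lra) H2).
      rewrite (Rabs_right Ub) in H5 by lra. unfold Lam; lra. }
  set (B := Rabs us + Rabs ws + Lam).
  assert (HlnB : forall t, t0 <= t -> Rabs (ln (x t)) <= B /\ Rabs (ln (y t)) <= B).
  { intros t Ht. destruct (Hdub t Ht). pose proof (Rabs_pos us). pose proof (Rabs_pos ws).
    split.
    - replace (ln (x t)) with (us + du t) by (unfold du; ring).
      pose proof (Rabs_triang us (du t)). unfold B; lra.
    - replace (ln (y t)) with (ws + dw t) by (unfold dw; ring).
      pose proof (Rabs_triang ws (dw t)). unfold B; lra. }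
  set (pmin := Rmin (k1 * exp (- (Rabs a1 * B + Rabs b1 * B))) (k3 * exp (- (Rabs a2 * B + Rabs b2 * B)))).
  assert (Hpmin : 0 < pmin).
  { unfold pmin. apply Rmin_glb_lt; apply Rmult_lt_0_compat; auto; apply exp_pos. }
  assert (HPmin : forall t, t0 <= t -> pmin <= P1 t /\ pmin <= P2 t).
  { intros t Ht. destruct (HlnB t Ht) as [Hbx Hby].
    pose proof (mul_lower a1 _ _ Hbx). pose proof (mul_lower b1 _ _ Hby).
    pose proof (mul_lower a2 _ _ Hbx). pose proof (mul_lower b2 _ _ Hby).
    pose proof (Rmin_l (k1 * exp (- (Rabs a1 * B + Rabs b1 * B))) (k3 * exp (- (Rabs a2 * B + Rabs b2 * B)))).
    pose proof (Rmin_r (k1 * exp (- (Rabs a1 * B + Rabs b1 * B))) (k3 * exp (- (Rabs a2 * B + Rabs b2 * B)))).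
    fold pmin in H3, H4. split.
    - assert (exp (- (Rabs a1 * B + Rabs b1 * B)) <= exp (a1 * ln (x t) + b1 * ln (y t))) by (apply exp_le_exp; lra).
      unfold P1. nra.
    - assert (exp (- (Rabs a2 * B + Rabs b2 * B)) <= exp (a2 * ln (x t) + b2 * ln (y t))) by (apply exp_le_exp; lra).
      unfold P2. nra. }
  set (Phi := (Rabs al1 + Rabs be1 + Rabs al2 + Rabs be2) * Lam).
  assert (HPhi : forall t, t0 <= t -> Rabs (ph1 t) <= Phi /\ Rabs (ph2 t) <= Phi).
  { intros t Ht. destruct (Hdub t Ht).
    pose proof (Rabs_pos al1). pose proof (Rabs_pos be1). pose proof (Rabs_pos al2). pose proof (Rabs_pos be2).
    unfold ph1, ph2, Phi. split.
    - pose proof (Rabs_triang (al1 * du t) (be1 * dw t)). rewrite !Rabs_mult in H5.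
      assert (Rabs al1 * Rabs (du t) <= Rabs al1 * Lam) by (apply Rmult_le_compat_l; auto).
      assert (Rabs be1 * Rabs (dw t) <= Rabs be1 * Lam) by (apply Rmult_le_compat_l; auto).
      pose proof (Rabs_pos (du t)). nra.
    - pose proof (Rabs_triang (al2 * du t) (be2 * dw t)). rewrite !Rabs_mult in H5.
      assert (Rabs al2 * Rabs (du t) <= Rabs al2 * Lam) by (apply Rmult_le_compat_l; auto).
      assert (Rabs be2 * Rabs (dw t) <= Rabs be2 * Lam) by (apply Rmult_le_compat_l; auto).
      pose proof (Rabs_pos (du t)). nra. }
  set (K1 := pmin * exp (- Phi)).
  assert (HK1 : 0 < K1) by (unfold K1; pose proof (exp_pos (- Phi)); nra).
  assert (HdGQ : forall t, t0 <= t -> dG t <= - K1 * (ph1 t ^ 2 + ph2 t ^ 2)).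
  { intros t Ht. destruct (HPhi t Ht) as [Hp1 Hp2]. destruct (HPmin t Ht) as [Hm1 Hm2].
    pose proof (phi_ineq _ _ Hp1). pose proof (phi_ineq _ _ Hp2).
    pose proof (exp_pos (- Phi)). pose proof (pow2_ge_0 (ph1 t)). pose proof (pow2_ge_0 (ph2 t)).
    assert (F1 t * ph1 t = - P1 t * ((exp (ph1 t) - 1) * ph1 t)) by (unfold F1; ring).
    assert (F2 t * ph2 t = - P2 t * ((exp (ph2 t) - 1) * ph2 t)) by (unfold F2; ring).
    assert (pmin * (exp (- Phi) * ph1 t ^ 2) <= P1 t * ((exp (ph1 t) - 1) * ph1 t)).
    { apply Rmult_le_compat; auto; try lra. apply Rmult_le_pos; lra. }
    assert (pmin * (exp (- Phi) * ph2 t ^ 2) <= P2 t * ((exp (ph2 t) - 1) * ph2 t)).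
    { apply Rmult_le_compat; auto; try lra. apply Rmult_le_pos; lra. }
    unfold dG, K1. nra. }
  assert (HDt2 : 0 < Dt ^ 2).
  { replace (Dt ^ 2) with (Rsqr Dt) by (unfold Rsqr; ring). apply Rsqr_pos_lt; auto. }
  set (S := al1 ^ 2 + be1 ^ 2 + al2 ^ 2 + be2 ^ 2).
  assert (HS : 0 < S).
  { assert (Dt ^ 2 <= 2 * S ^ 2).
    { unfold Dt, S. pose proof (pow2_ge_0 (al1 * be2 + al2 * be1)).
      pose proof (pow2_ge_0 al1). pose proof (pow2_ge_0 be1). pose proof (pow2_ge_0 al2).
      pose proof (pow2_ge_0 be2). nra. }
    assert (0 <= S) by (unfold S; pose proof (pow2_ge_0 al1); pose proof (pow2_ge_0 be1);
      pose proof (pow2_ge_0 al2); pose proof (pow2_ge_0 be2); lra).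
    destruct (Rle_lt_or_eq_dec 0 S H0); auto. rewrite <- e in H. lra. }
  set (K2 := exp Lam * (xs + ys)).
  assert (HK2 : 0 < K2) by (unfold K2; pose proof (exp_pos Lam); nra).
  assert (HGZ : forall t, t0 <= t -> G t <= K2 * (du t ^ 2 + dw t ^ 2)).
  { intros t Ht. destruct (Hdub t Ht).
    pose proof (kf_upper (du t)). pose proof (kf_upper (dw t)).
    assert (exp (Rabs (du t)) <= exp Lam) by (apply exp_le_exp; auto).
    assert (exp (Rabs (dw t)) <= exp Lam) by (apply exp_le_exp; auto).
    pose proof (pow2_ge_0 (du t)). pose proof (pow2_ge_0 (dw t)).
    assert (du t ^ 2 * exp (Rabs (du t)) <= du t ^ 2 * exp Lam) by (apply Rmult_le_compat_l; auto).
    assert (dw t ^ 2 * exp (Rabs (dw t)) <= dw t ^ 2 * exp Lam) by (apply Rmult_le_compat_l; auto).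
    assert (xs * kf (du t) <= xs * (du t ^ 2 * exp Lam)) by (apply Rmult_le_compat_l; lra).
    assert (ys * kf (dw t) <= ys * (dw t ^ 2 * exp Lam)) by (apply Rmult_le_compat_l; lra).
    unfold G, K2. pose proof (exp_pos Lam). assert (0 <= ys * du t ^ 2 * exp Lam) by (apply Rmult_le_pos; nra). assert (0 <= xs * dw t ^ 2 * exp Lam) by (apply Rmult_le_pos; nra). nra. }
  set (c3 := K1 * (Dt ^ 2 / (4 * S)) / K2).
  assert (Hc3 : 0 < c3).
  { unfold c3. apply Rdiv_lt_0_compat; auto. apply Rmult_lt_0_compat; auto.
    apply Rdiv_lt_0_compat; lra. }
  assert (Hdec : forall t, t0 <= t -> dG t <= - c3 * G t).
  { intros t Ht. pose proof (HdGQ t Ht). pose proof (HGZ t Ht).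
    pose proof (quad_bound al1 be1 al2 be2 (du t) (dw t)). simpl in H1.
    change (Dt ^ 2 * (du t ^ 2 + dw t ^ 2) <= 4 * S * (ph1 t ^ 2 + ph2 t ^ 2)) in H1.
    set (Z := du t ^ 2 + dw t ^ 2) in *. set (Q := ph1 t ^ 2 + ph2 t ^ 2) in *.
    assert (Dt ^ 2 / (4 * S) * Z <= Q).
    { apply Rmult_le_reg_l with (4 * S). lra. field_simplify; lra. }
    assert (c3 * G t <= K1 * (Dt ^ 2 / (4 * S)) * Z).
    { assert (Ha : c3 * G t <= c3 * (K2 * Z)) by (apply Rmult_le_compat_l; lra).
      assert (Hb : c3 * K2 = K1 * (Dt ^ 2 / (4 * S))) by (unfold c3; field; lra).
      rewrite <- Hb. lra. }
    assert (K1 * (Dt ^ 2 / (4 * S) * Z) <= K1 * Q) by (apply Rmult_le_compat_l; lra).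
    lra. }
  pose proof (decay_to_zero G dG t0 c3 Hc3 (fun t Ht => HdG t ltac:(lra)) (fun t _ => Gnn t) Hdec) as Hz.
  exists xs, ys. split; auto. split; auto. split; [|split; [|split]].
  - unfold xs, ys. rewrite mono_exp. fold al1 be1. rewrite E1. unfold c1. apply exp_ratio; auto.
  - unfold xs, ys. rewrite mono_exp. fold al2 be2. rewrite E2. unfold c2. apply exp_ratio; auto.
  - apply (conv_from_G x G us t0 Hz). intros t Ht. split. apply Hpos; lra.
    unfold G. pose proof (kf_nonneg (dw t)). change (xs * kf (du t) <= xs * kf (du t) + ys * kf (dw t)). nra.
  - apply (conv_from_G y G ws t0 Hz). intros t Ht. split. apply Hpos; lra.
    unfold G. pose proof (kf_nonneg (du t)). change (ys * kf (dw t) <= xs * kf (du t) + ys * kf (dw t)). nra.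
Qed.

Lemma indep_det u1 u2 w1 w2 : lin_indep2 u1 u2 w1 w2 -> u1 * w2 - w1 * u2 <> 0.
Proof.
  intros H Hd.
  destruct (H w2 (- u2)) as [H1 H2]; [lra|lra|].
  destruct (H w1 (- u1)) as [H3 H4]; [lra|lra|].
  assert (u1 = 0) by lra. assert (u2 = 0) by lra.
  destruct (H 1 0) as [Hf _]; [subst; lra|subst; lra|lra].
Qed.

Theorem lemma4p1 (a1 b1 a1' b1' a2 b2 a2' b2' eps : R) :
  0 <= a1 -> 0 <= b1 -> 0 <= a1' -> 0 <= b1' ->
  0 <= a2 -> 0 <= b2 -> 0 <= a2' -> 0 <= b2' ->
  lin_indep2 (a1' - a1) (b1' - b1) (a2' - a2) (b2' - b2) ->
  0 < eps < 1 ->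
  (forall x y : R -> R,
     is_solution a1 b1 a1' b1' a2 b2 a2' b2' eps (/ eps) (/ eps) eps x y ->
     converges_to_intersection a1 b1 a1' b1' a2 b2 a2' b2' (eps ^ 2) (/ eps ^ 2) x y) /\
  (forall x y : R -> R,
     is_solution a1 b1 a1' b1' a2 b2 a2' b2' (/ eps) eps (/ eps) eps x y ->
     converges_to_intersection a1 b1 a1' b1' a2 b2 a2' b2' (/ eps ^ 2) (/ eps ^ 2) x y) /\
  (forall x y : R -> R,
     is_solution a1 b1 a1' b1' a2 b2 a2' b2' (/ eps) eps eps (/ eps) x y ->
     converges_to_intersection a1 b1 a1' b1' a2 b2 a2' b2' (/ eps ^ 2) (eps ^ 2) x y) /\
  (forall x y : R -> R,
     is_solution a1 b1 a1' b1' a2 b2 a2' b2' eps (/ eps) eps (/ eps) x y ->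
     converges_to_intersection a1 b1 a1' b1' a2 b2 a2' b2' (eps ^ 2) (eps ^ 2) x y).
Proof.
  intros _ _ _ _ _ _ _ _ Hind Heps.
  pose proof (indep_det _ _ _ _ Hind) as HD.
  assert (He : 0 < eps) by lra. assert (Hie : 0 < / eps) by (apply Rinv_0_lt_compat; lra).
  assert (R1 : eps / / eps = eps ^ 2) by (field; lra).
  assert (R2 : / eps / eps = / eps ^ 2) by (field; lra).
  unfold converges_to_intersection.
  repeat split; intros x y Hs;
  [ rewrite <- R2, <- R1 | rewrite <- R2 | rewrite <- R2, <- R1 | rewrite <- R1 ];
  apply (general a1 b1 a1' b1' a2 b2 a2' b2' _ _ _ _ x y); auto.
Qed.
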